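(* In the setting of the context, suppose $\delta_1\ge\delta_2\ge\cdots\ge\delta_s$. Then every vector of $C^\perp\setminus C$ has weight at least $\min_{1\le j\le s}\delta_jn_2(k_j+1)$. Consequently the relative minimum distance $\delta$ of the generalized concatenated quantum code $Q$ (of length $n_1n_2$ and rate $R=r-\frac{2r}{s}\sum_{j=1}^s r'_j$, where $r=sm/n_2$ and $r'_j=k_j/n_1$) satisfies \[ \delta\ge\min_{1\le j\le s}\delta_j r'_j . \]
   Context: $\mathbb{F}_4=\{0,1,\omega,\omega^2\}$, $\omega^2=\omega+1$, $\bar x=x^2$; trace inner product $\langle u,v\rangle=\sum_i(u_i\bar v_i+\bar u_iv_i)\in\mathbb{F}_2$; additive codes are $\mathbb{F}_2$-subspaces, $C^\perp$ is the trace dual, self-orthogonal means $C\subseteq C^\perp$; weight = number of nonzero coordinates; a stabilizer code $[[N,K,D]]$ is given by a self-orthogonal $C$ with $|C|=2^{N-K}$ such that all vectors of $C^\perp\setminus C$ have weight $\ge D$. Outer codes: let $s\ge2$, $m\ge2$, $n_1=2^m-1$, and integers $1\le k_i\le 2^{m-1}-1$ ($1\le i\le s$). For each $i$, let $B_i\subseteq B_i^\perp\subseteq\mathbb{F}_4^{mn_1}$ be the quantum Reed–Solomon pair $B_i=\omega\mathcal B(C^{(i)}_{\rm RS})+\bar\omega\mathcal B(C^{(i)}_{\rm RS})$, $B_i^\perp=\omega\mathcal B(C^{(i)\perp}_{\rm RS})+\bar\omega\mathcal B(C^{(i)\perp}_{\rm RS})$, where $C^{(i)}_{\rm RS}$ is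 the cyclic Reed–Solomon code of length $n_1$ over $\mathbb{F}_{2^m}$ with generator polynomial $\prod_{l=0}^{n_1-k_i-1}(x-\alpha^l)$ ($\alpha$ primitive), $C^{(i)\perp}_{\rm RS}$ its dual (minimum distance $k_i+1$), and $\mathcal B(\cdot)$ is binary expansion w.r.t. a fixed self-dual basis of $\mathbb{F}_{2^m}/\mathbb{F}_2$. Vectors of $\mathbb{F}_4^{mn_1}$ are written as $(b_1,\dots,b_{n_1})$ with $b_l\in\mathbb{F}_4^m$ (one block per Reed–Solomon position). Let $B=B_1\oplus\cdots\oplus B_s$ and $B^\perp=B_1^\perp\oplus\cdots\oplus B_s^\perp$; an element $b=(\mathbf b_1,\dots,\mathbf b_s)$ with $\mathbf b_i=(b_{i,1},\dots,b_{i,n_1})$ is viewed as an $s\times n_1$ array over $\mathbb{F}_4^m$ with columns $c_l=(b_{1,l},\dots,b_{s,l})\in\mathbb{F}_4^{sm}$. Inner codes: $n_2\ge sm$, and self-orthogonal additive codes $C_s\subseteq C_{s-1}\subseteq\cdots\subseteq C_1\subseteq\mathbb{F}_4^{n_2}$ with $|C_j|=2^{n_2-jm}$, such that every vector of $C_j^\perp\setminus C_j$ has weight at least $\delta_jn_2$ (so $C_j$ defines an $[[n_2,jm,\delta_jn_2]]$ code $Q_2^{(j)}$). Let $g_i,h_i\in C_s^\perp$ ($1\le i\le sm$) satisfy $\langle g_i,h_l\rangle=\delta_{il}$, $\langle g_i,g_l\rangle=\langle h_i,h_l\rangle=0$, and for every $j$, $C_j^\perp=C_j+\mathrm{span}_{\mathbb{F}_2}\{g_i,h_i:1\le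 i\le jm\}$. Let $e_1,\dots,e_{sm}$ be the standard basis of $\mathbb{F}_4^{sm}$ and define the $\mathbb{F}_2$-linear map $\rho:\mathbb{F}_4^{sm}\to C_s^\perp/C_s$ by $\rho(\omega e_i)=g_i+C_s$, $\rho(\bar\omega e_i)=h_i+C_s$. The code: $C^\perp=\{(w_1,\dots,w_{n_1})\in(\mathbb{F}_4^{n_2})^{n_1}:\exists b\in B^\perp,\ w_l\in\rho(c_l)\ \forall l\}$ and $C$ is defined the same way with $b\in B$; $C\subseteq C^\perp$, $C^\perp$ is the trace dual of $C$, and $Q$ denotes the stabilizer code defined by $C$. *)

(* Defs.v *)
From HB Require Import structures.
From mathcomp Require Import all_boot all_order all_algebra.
Set Implicit Arguments. Unset Strict Implicit. Unset Printing Implicit Defensive.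
Import Order.TTheory GRing.Theory Num.Theory.
Local Open Scope ring_scope.

Section Quaternary.
Variable F : finFieldType.

(* trace (Hermitian) inner product <u,v> = sum_i (u_i * conj v_i + conj u_i * v_i),
   conj x = x^2; its value lies in F_2 = {0,1} inside F *)
Definition tip n (u v : 'rV[F]_n) : F :=
  \sum_(i < n) (u 0 i * (v 0 i) ^+ 2 + (u 0 i) ^+ 2 * v 0 i).

Definition tdual n (C : {set 'rV[F]_n}) : {set 'rV[F]_n} :=
  [set v : 'rV[F]_n | [forall u : 'rV[F]_n, (u \in C) ==> (tip u v == 0)]].

(* additive code = F_2-subspace (F has characteristic 2: 0 and closure under +) *)
Definition additive_code n (C : {set 'rV[F]_n}) : Prop :=
  (0 : 'rV[F]_n) \in C /\ forall u v, u \in C -> v \in C -> u + v \in C.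

Definition self_orth n (C : {set 'rV[F]_n}) : Prop := C \subset tdual C.

Definition wt n (v : 'rV[F]_n) : nat := #|[set i : 'I_n | v 0 i != 0]|.

Definition bF (x : bool) : F := (nat_of_bool x)%:R.

End Quaternary.

Section Outer.
Variables (K : finFieldType) (m n1 : nat) (alpha : K) (beta : 'I_m -> K).

Definition trK (x : K) : K := \sum_(t < m) x ^+ (2 ^ t).

Definition self_dual_basis : Prop :=
  forall i j : 'I_m, trK (beta i * beta j) = (i == j)%:R.

Definition RSgen (k : nat) : {poly K} :=
  \prod_(l < n1 - k) ('X - (alpha ^+ l)%:P).

Definition RS (k : nat) : {set 'rV[K]_n1} :=
  [set c : 'rV[K]_n1 | RSgen k %| \sum_(j < n1) c 0 j *: 'X^j].

Definition RSdual (k : nat) : {set 'rV[K]_n1} :=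
  [set d : 'rV[K]_n1 | [forall c : 'rV[K]_n1, (c \in RS k) ==> (\sum_(j < n1) c 0 j * d 0 j == 0)]].

(* x (an n1 x m bit array, block l = binary expansion of position l)
   lies in the binary expansion B(C) w.r.t. basis beta *)
Definition in_binexp (C : {set 'rV[K]_n1}) (x : 'I_n1 -> 'I_m -> bool) : Prop :=
  exists2 c, c \in C & forall l : 'I_n1,
      c 0 l = \sum_(t < m) (nat_of_bool (x l t))%:R * beta t.

Variables (F : finFieldType) (om : F).

(* b in  om*B(C) + conj(om)*B(C)  (b : blocks b_l in F^m) *)
Definition in_omB (C : {set 'rV[K]_n1}) (b : 'I_n1 -> 'I_m -> F) : Prop :=
  exists x y : 'I_n1 -> 'I_m -> bool,
    [/\ in_binexp C x, in_binexp C y &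
        forall l t, b l t = bF F (x l t) * om + bF F (y l t) * om ^+ 2].

Definition in_Bi (k : nat) := in_omB (RS k).
Definition in_Biperp (k : nat) := in_omB (RSdual k).

End Outer.

Section Concat.
Variables (F : finFieldType) (om : F) (s m n2 : nat).
(* g i t, h i t (1 <= i <= s, t < m) stand for g_{(i-1)m+t+1}, h_{(i-1)m+t+1} *)
Variables (Cs : {set 'rV[F]_n2}) (g h : nat -> 'I_m -> 'rV[F]_n2).

Definition ghcomb (j : nat) (a b : nat -> 'I_m -> bool) : 'rV[F]_n2 :=
  \sum_(1 <= i < j.+1) \sum_(t < m)
     (bF F (a i t) *: g i t + bF F (b i t) *: h i t).

(* w belongs to the coset rho(c), c a column in F^{sm} (c i t = coordinate (i-1)m+t+1),
   rho the F_2-linear map with rho(om e_i) = g_i + Cs, rho(conj om e_i) = h_i + Cs *)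
Definition in_rho (c : nat -> 'I_m -> F) (w : 'rV[F]_n2) : Prop :=
  exists a b : nat -> 'I_m -> bool,
    (forall i t, (1 <= i <= s)%N -> c i t = bF F (a i t) * om + bF F (b i t) * om ^+ 2)
    /\ w - ghcomb s a b \in Cs.

End Concat.

Section GC.
Variables (K : finFieldType) (m n1 : nat) (alpha : K) (beta : 'I_m -> K).
Variables (F : finFieldType) (om : F) (s n2 : nat) (k : nat -> nat).
Variables (Cs : {set 'rV[F]_n2}) (g h : nat -> 'I_m -> 'rV[F]_n2).

(* C^perp : words (w_1..w_{n1}) with w_l in rho(c_l) for some b in B^perp *)
Definition in_GCperp (w : 'I_n1 -> 'rV[F]_n2) : Prop :=
  exists b : nat -> 'I_n1 -> 'I_m -> F,
    (forall i, (1 <= i <= s)%N -> @in_Biperp K m n1 alpha beta F om (k i) (b i)) /\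
    forall l : 'I_n1, in_rho om s Cs g h (fun i t => b i l t) (w l).

Definition in_GC (w : 'I_n1 -> 'rV[F]_n2) : Prop :=
  exists b : nat -> 'I_n1 -> 'I_m -> F,
    (forall i, (1 <= i <= s)%N -> @in_Bi K m n1 alpha beta F om (k i) (b i)) /\
    forall l : 'I_n1, in_rho om s Cs g h (fun i t => b i l t) (w l).

End GC.

Definition wtG (F : finFieldType) n1 n2 (w : 'I_n1 -> 'rV[F]_n2) : nat :=
  \sum_(l < n1) wt (w l).

Definition minj (R : realFieldType) (s : nat) (f : nat -> R) : R :=
  \big[Num.min/f 1%N]_(1 <= j < s.+1) f j.

(* Main.v *)
Require Import Defs.
From HB Require Import structures.
From mathcomp Require Import all_boot all_order all_algebra all_field zify ring lra.
Import Order.TTheory GRing.Theory Num.Theory.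
Local Open Scope ring_scope.

Section Tip.
Variable F : finFieldType.
Hypothesis ch : 2%N \in [pchar F].

Lemma sqrD (x y : F) : (x + y) ^+ 2 = x ^+ 2 + y ^+ 2.
Proof. by rewrite sqrrD -mulr_natr (pcharf0 ch) mulr0 addr0. Qed.

Lemma tipC n (u v : 'rV[F]_n) : tip u v = tip v u.
Proof. by apply: eq_bigr => i _; rewrite addrC; congr (_ + _); apply: mulrC. Qed.

Lemma tipDl n (u v z : 'rV[F]_n) : tip (u + v) z = tip u z + tip v z.
Proof.
rewrite /tip -big_split /=; apply: eq_bigr => i _; rewrite !mxE sqrD.
by rewrite mulrDl mulrDl addrACA.
Qed.

Lemma tip0l n (z : 'rV[F]_n) : tip 0 z = 0.
Proof. by rewrite /tip big1 // => i _; rewrite mxE expr0n /= !mul0r addr0. Qed.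

Lemma tip_suml n (I : Type) (r : seq I) (P : pred I) (f : I -> 'rV[F]_n) z :
  tip (\sum_(i <- r | P i) f i) z = \sum_(i <- r | P i) tip (f i) z.
Proof.
elim/big_rec2: _ => [|i a y _ <-]; first exact: tip0l.
by rewrite tipDl.
Qed.

Lemma tipZl n (x : bool) (u z : 'rV[F]_n) : tip (bF F x *: u) z = bF F x * tip u z.
Proof.
case: x; rewrite /bF /= ?scale1r ?mul1r //.
by rewrite scale0r mul0r tip0l.
Qed.

End Tip.

Lemma char2F (F : finFieldType) : #|F| = 4%N -> 2%N \in [pchar F].
Proof. by move=> h; apply: (@card_finPcharP _ 2 2). Qed.

Lemma geom0 (K : fieldType) n (z : K) : z ^+ n = 1 -> z != 1 ->
  \sum_(i < n) z ^+ i = 0.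
Proof.
move=> h1 h2; have := subrX1 z n; rewrite h1 subrr => /esym/eqP.
by rewrite mulf_eq0 subr_eq0 (negbTE h2) /= => /eqP.
Qed.

Section RSsec.
Variables (K : finFieldType) (n1 : nat) (alpha : K).
Hypothesis prim : n1.-primitive_root alpha.

Lemma RSmem (k : nat) (Q : {poly K}) : (k < n1)%N -> Q`_0 = 0 -> (size Q <= k.+1)%N ->
  (\row_(j < n1) Q.[alpha ^+ j]) \in RS n1 alpha k.
Proof.
move=> hk hQ0 hQs; rewrite inE.
set P := \sum_(j < n1) _ *: _.
set rs := [seq alpha ^+ l | l <- iota 0 (n1 - k)].
have -> : RSgen n1 alpha k = \prod_(z <- rs) ('X - z%:P).
  by rewrite big_map /RSgen -(big_mkord xpredT (fun l => 'X - (alpha^+l)%:P)) /index_iota subn0.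
have hr : all (root P) rs.
  apply/allP => z /mapP [l]; rewrite mem_iota add0n => hl ->.
  rewrite /root /P horner_sum.
  under eq_bigr do rewrite hornerZ hornerXn mxE horner_coef big_distrl /=.
  rewrite exchange_big /= big1 // => t _.
  case: t => [[|t] ht] /=; first by rewrite big1 // => i _; rewrite hQ0 !mul0r.
  have E : forall i : 'I_n1, Q`_t.+1 * alpha ^+ i ^+ t.+1 * alpha ^+ l ^+ i = Q`_t.+1 * (alpha ^+ (t.+1 + l)) ^+ i.
    move=> i; rewrite -mulrA -!exprM -exprD; congr (_ * alpha ^+ _); nia.
  under eq_bigr do rewrite E.
  rewrite -big_distrr /=.
  rewrite (@geom0 _ n1) ?mulr0 //.
    by rewrite -exprM mulnC exprM (prim_expr_order prim) expr1n.
  rewrite -(prim_order_dvd prim); apply/negP => /dvdn_leq.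
  rewrite addn_gt0 /= => /(_ isT).
  have := leq_trans ht hQs; rewrite ltnS => htk.
  have : (l + t.+1 < n1)%N.
    by move: hl htk hk; clear; move=> *; lia.
  by rewrite addnC => /leq_trans h /h; rewrite ltnn.
have hu : uniq_roots rs.
  rewrite uniq_rootsE map_inj_in_uniq ?iota_uniq // => i j.
  rewrite !mem_iota !add0n => hi hj /eqP; rewrite (eq_prim_root_expr prim).
  by rewrite !modn_small => [/eqP||]; lia.
have [q ->] := uniq_roots_prod_XsubC hr hu.
by apply: dvdp_mulIr.
Qed.

Lemma alpha_neq (i j : 'I_n1) : i != j -> alpha ^+ i != alpha ^+ j.
Proof.
move=> hij; rewrite (eq_prim_root_expr prim) !modn_small //.
Qed.

Lemma RSdual_wt (k : nat) (d : 'rV[K]_n1) : (1 <= k < n1)%N ->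
  d \in RSdual n1 alpha k -> d != 0 -> leq k.+1 #|[set l : 'I_n1 | d 0 l != 0]|.
Proof.
move=> /andP[k1 hk] hd dn0; rewrite ltnNge; apply/negP => hS.
set S := [set l : 'I_n1 | d 0 l != 0] in hS.
have [j0 hj0] : exists j0, d 0 j0 != 0.
  case: (pickP (fun j => d 0 j != 0)) => [j0 h|h]; first by exists j0.
  have d0 : d = 0 by apply/rowP => j; rewrite mxE; apply/eqP; apply: negbFE; exact: h.
  by move: dn0; rewrite d0 eqxx.
pose Q : {poly K} := 'X * \prod_(j <- enum (S :\ j0)) ('X - (alpha ^+ val j)%:P).
have hQ : (\row_(j < n1) Q.[alpha ^+ j]) \in RS n1 alpha k.
  apply: RSmem => //; first by rewrite coefXM.
  apply: leq_trans (size_mul_leq _ _) _.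
  rewrite size_polyX size_prod_XsubC -cardE /=.
  have := cardsD1 j0 S; rewrite inE hj0 /= => hc; rewrite (_ : (1%R : nat) = 1%N) // mulr1n; move: hS; rewrite hc; lia.
move: hd; rewrite inE => /forallP /(_ (\row_(j < n1) Q.[alpha ^+ j])); rewrite hQ /=.
rewrite (bigD1 j0) //= big1 ?addr0 => [|j hj].
  rewrite mxE mulf_eq0 (negbTE hj0) orbF; apply/negP; rewrite /Q hornerM hornerX horner_prod mulf_eq0 negb_or.
  rewrite expf_eq0 negb_and.
  have a0 : alpha != 0.
    apply/negP => /eqP a0; have := prim_expr_order prim; rewrite a0 expr0n.
    have : (0 < n1)%N by case: (n1) hk.
    by case: (n1) => // ? _ /eqP; rewrite eq_sym oner_eq0.
  rewrite a0 orbT /= prodf_seq_neq0; apply/allP => j; rewrite mem_enum !inE => /andP[hj _].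
  by rewrite hornerXsubC subr_eq0 alpha_neq // eq_sym.
rewrite mxE; case: (boolP (d 0 j == 0)) => [/eqP -> |hd]; first by rewrite mulr0.
rewrite /Q hornerM horner_prod (big_rem j) /=; last by rewrite mem_enum !inE hj hd.
by rewrite hornerXsubC subrr mul0r mulr0 mul0r.
Qed.
End RSsec.

Section Kside.
Variables (K : finFieldType) (m : nat) (beta : 'I_m -> K).
Hypothesis ch : 2%N \in [pchar K].
Hypothesis hb : self_dual_basis beta.

Lemma trK_add (x y : K) : trK m (x + y) = trK m x + trK m y.
Proof.
rewrite /trK -big_split; apply: eq_bigr => t _; apply: exprDn_pchar.
by rewrite (eq_pnat _ (pcharf_eq ch)) pnatX pnat_id.
Qed.

Lemma trK0 : trK m (0 : K) = 0.
Proof. by rewrite /trK big1 // => t _; rewrite expr0n expn_eq0. Qed.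

Lemma trK_sum (I : Type) (r : seq I) (f : I -> K) :
  trK m (\sum_(i <- r) f i) = \sum_(i <- r) trK m (f i).
Proof.
elim/big_rec2: _ => [|i a y _ <-]; first exact: trK0.
by rewrite trK_add.
Qed.

Lemma indepK (x : 'I_m -> bool) :
  \sum_(t < m) (nat_of_bool (x t))%:R * beta t = 0 -> forall t, x t = false.
Proof.
move=> h t'.
have : trK m ((\sum_(t < m) (nat_of_bool (x t))%:R * beta t) * beta t') = 0.
  by rewrite h mul0r trK0.
rewrite big_distrl trK_sum (bigD1 t') //= big1 ?addr0.
  by case: (x t') => //; rewrite mul1r hb eqxx => /eqP; rewrite oner_eq0.
move=> t htt; case: (x t); rewrite ?mul0r ?trK0 // mul1r hb.
by rewrite (negbTE htt).
Qed.
End Kside.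

Lemma char2card (F : finFieldType) m : #|F| = (2 ^ m)%N -> 2%N \in [pchar F].
Proof. by move=> h; apply: (@card_finPcharP _ 2 m). Qed.

Section Om.
Variables (F : finFieldType) (om : F).
Hypothesis hom : om ^+ 2 = om + 1.

Lemma om_neq0 : om != 0.
Proof. by apply/negP => /eqP h; move: hom; rewrite h expr0n /= add0r => /eqP; rewrite eq_sym oner_eq0. Qed.

Lemma om2_neq0 : om ^+ 2 != 0.
Proof. by rewrite expf_neq0 // om_neq0. Qed.

Lemma omsum_neq0 : om + om ^+ 2 != 0.
Proof.
apply/negP => /eqP h.
have h1 : om * (1 + om) = 0 by rewrite mulrDr mulr1 -expr2.
move: h1 => /eqP; rewrite mulf_eq0 (negbTE om_neq0) /= addrC addr_eq0 => /eqP hm1.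
move: hom; rewrite hm1 sqrrN expr1n addrC subrr => /eqP; rewrite oner_eq0.
done.
Qed.


Lemma bF_zero (x y : bool) : bF F x * om + bF F y * om ^+ 2 = 0 -> x = false /\ y = false.
Proof.
case: x; case: y; rewrite /bF /= ?mul1r ?mul0r ?addr0 ?add0r => /eqP;
  rewrite ?(negbTE omsum_neq0) ?(negbTE om_neq0) ?(negbTE om2_neq0) //.
Qed.
End Om.

Lemma Bcount (K F : finFieldType) m n1 (alpha : K) (beta : 'I_m -> K) (om : F) k
  (b : 'I_n1 -> 'I_m -> F) :
  n1.-primitive_root alpha -> 2%N \in [pchar K] -> self_dual_basis beta ->
  om ^+ 2 = om + 1 -> (1 <= k < n1)%N ->
  in_Biperp alpha beta om k b -> (exists l t, b l t != 0) ->
  leq k.+1 #|[set l : 'I_n1 | [exists t, b l t != 0]]|.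
Proof.
move=> prim ch hb hom hk [x [y [[cx hcx ex] [cy hcy ey] hbb]]] [l0 [t0 hnz]].
have key : forall (z : 'I_n1 -> 'I_m -> bool) (c : 'rV[K]_n1), c \in RSdual n1 alpha k ->
    (forall l, c 0 l = \sum_(t < m) (nat_of_bool (z l t))%:R * beta t) -> z l0 t0 ->
    (forall l t, z l t -> b l t != 0) ->
    leq k.+1 #|[set l : 'I_n1 | [exists t, b l t != 0]]|.
  move=> z c hc ec hz hzb.
  have cn0 : c != 0.
    apply/negP => /eqP c0.
    have := @indepK K m beta ch hb (z l0); rewrite -ec c0 mxE => /(_ erefl t0).
    by rewrite hz.
  apply: leq_trans (@RSdual_wt _ _ _ prim k c hk hc cn0) _.
  apply: subset_leq_card; apply/subsetP => l; rewrite !inE => hl.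
  apply/existsP; case: (pickP (z l)) => [t ht| hn]; first by exists t; apply: hzb.
  by move: hl; rewrite ec big1 ?eqxx // => t _; rewrite hn mul0r.
case: (boolP (x l0 t0)) => hx.
  apply: (key x cx) => // l t hxt; rewrite hbb; apply/eqP => /(@bF_zero _ _ hom _ _) [].
  by rewrite hxt.
case: (boolP (y l0 t0)) => hy.
  apply: (key y cy) => // l t hyt; rewrite hbb; apply/eqP => /(@bF_zero _ _ hom _ _) [].
  by rewrite hyt.
by move: hnz; rewrite hbb (negbTE hx) (negbTE hy) /bF /= !mul0r addr0 eqxx.
Qed.

Lemma minj_le (R : realFieldType) s (f : nat -> R) j : (1 <= j <= s)%N -> minj s f <= f j.
Proof.
move=> hj; have : j \in index_iota 1 s.+1 by rewrite mem_index_iota ltnS.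
clear hj; rewrite /minj; elim: (index_iota 1 s.+1) => //= i r IH.
rewrite inE big_cons => /orP [/eqP <-| hr]; first by rewrite ge_min lexx.
by rewrite ge_min IH // orbT.
Qed.

Lemma sum_delta (F : finFieldType) s m j (t0 : 'I_m) (f : nat -> 'I_m -> F) : (1 <= j <= s)%N ->
  \sum_(1 <= i < s.+1) \sum_(t < m) f i t * ((i == j) && (t == t0))%:R = f j t0.
Proof.
move=> hj; rewrite (bigD1_seq j) ?mem_index_iota ?iota_uniq //= [X in _ + X]big1 ?addr0.
  rewrite (bigD1 t0) //= !eqxx /= mulr1n mulr1 big1 ?addr0 // => t ht.
  by rewrite (negbTE ht) mulr0.
move=> i hi; rewrite big1 // => t _.
by rewrite (negbTE hi) mulr0.
Qed.

Section GH.
Variables (F : finFieldType) (m n2 : nat) (g h : nat -> 'I_m -> 'rV[F]_n2).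
Hypothesis ch : 2%N \in [pchar F].

Lemma tip_ghcomb s a b z :
  tip (ghcomb g h s a b) z = \sum_(1 <= i < s.+1) \sum_(t < m)
     (bF F (a i t) * tip (g i t) z + bF F (b i t) * tip (h i t) z).
Proof.
rewrite /ghcomb tip_suml //; apply: eq_bigr => i _.
rewrite tip_suml //; apply: eq_bigr => t _.
by rewrite tipDl // !tipZl.
Qed.

Lemma ghcomb_trunc s j a b : (j <= s)%N ->
  (forall i t, (j < i <= s)%N -> a i t = false /\ b i t = false) ->
  ghcomb g h s a b = ghcomb g h j a b.
Proof.
move=> hjs hz; rewrite /ghcomb (big_cat_nat _ (n := j.+1)) //= ?ltnS //.
rewrite [X in _ + X]big1_seq ?addr0 // => i; rewrite mem_index_iota => /andP[_ hi].
rewrite big1 // => t _; have [-> ->] := hz i t hi.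
by rewrite /bF /= !scale0r addr0.
Qed.

Lemma ghcomb_unitg j t0 : (1 <= j)%N ->
  ghcomb g h j (fun i t => (i == j) && (t == t0)) (fun _ _ => false) = g j t0.
Proof.
move=> hj; rewrite /ghcomb big_nat_recr //= big1_seq ?add0r => [|i].
  rewrite (bigD1 t0) //= !eqxx /bF /= scale1r scale0r addr0 big1 ?addr0 // => t ht.
  by rewrite (negbTE ht) /bF /= !scale0r addr0.
move=> /andP[_]; rewrite mem_index_iota => /andP[_ hi]; rewrite big1 // => t _.
by rewrite (ltn_eqF hi) /= /bF /= !scale0r addr0.
Qed.

Lemma ghcomb_unith j t0 : (1 <= j)%N ->
  ghcomb g h j (fun _ _ => false) (fun i t => (i == j) && (t == t0)) = h j t0.
Proof.
move=> hj; rewrite /ghcomb big_nat_recr //= big1_seq ?add0r => [|i].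
  rewrite (bigD1 t0) //= !eqxx /bF /= scale1r scale0r add0r big1 ?addr0 // => t ht.
  by rewrite (negbTE ht) /bF /= !scale0r addr0.
move=> /andP[_]; rewrite mem_index_iota => /andP[_ hi]; rewrite big1 // => t _.
by rewrite (ltn_eqF hi) /= /bF /= !scale0r addr0.
Qed.
End GH.

Lemma Bi_zero (K F : finFieldType) m n1 (alpha : K) (beta : 'I_m -> K) (om : F) k
  (b : 'I_n1 -> 'I_m -> F) : (forall l t, b l t = 0) -> in_Bi alpha beta om k b.
Proof.
move=> hb; exists (fun _ _ => false), (fun _ _ => false); split.
- exists 0; last by move=> l; rewrite mxE big1 // => t _; rewrite mul0r.
  rewrite inE (_ : \sum_(j < n1) _ = 0) ?dvdp0 //.
  by apply: big1 => j _; rewrite mxE scale0r.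
- exists 0; last by move=> l; rewrite mxE big1 // => t _; rewrite mul0r.
  rewrite inE (_ : \sum_(j < n1) _ = 0) ?dvdp0 //.
  by apply: big1 => j _; rewrite mxE scale0r.
- by move=> l t; rewrite hb /bF /= !mul0r addr0.
Qed.

Lemma bF_eq0 (F : finFieldType) x : bF F x = 0 -> x = false.
Proof. by case: x => //; rewrite /bF /= => /eqP; rewrite oner_eq0. Qed.

Theorem lemma2
  (* F = F_4 *)
  (F : finFieldType) (om : F) (hF : #|F| = 4%N) (hom : om ^+ 2 = om + 1)
  (s m n1 n2 : nat) (hs : (2 <= s)%N) (hm : (2 <= m)%N) (hn1 : n1 = (2 ^ m - 1)%N)
  (* K = F_{2^m}, alpha primitive, beta a self-dual basis *)
  (K : finFieldType) (hK : #|K| = (2 ^ m)%N) (alpha : K)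
  (halpha : n1.-primitive_root alpha)
  (beta : 'I_m -> K) (hbeta : self_dual_basis beta)
  (k : nat -> nat)
  (hk : forall i, (1 <= i <= s)%N -> (1 <= k i <= 2 ^ (m - 1) - 1)%N)
  (hn2 : (s * m <= n2)%N)
  (* inner codes C_1 ⊇ ... ⊇ C_s *)
  (R : realFieldType) (delta : nat -> R)
  (C : nat -> {set 'rV[F]_n2})
  (hCadd : forall j, (1 <= j <= s)%N -> additive_code (C j))
  (hCso : forall j, (1 <= j <= s)%N -> self_orth (C j))
  (hCcard : forall j, (1 <= j <= s)%N -> #|C j| = (2 ^ (n2 - j * m))%N)
  (hCnest : forall j, (1 <= j < s)%N -> C j.+1 \subset C j)
  (hCdist : forall j, (1 <= j <= s)%N ->
     forall v, v \in tdual (C j) :\: C j -> delta j * n2%:R <= (wt v)%:R)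
  (* g_i, h_i *)
  (g h : nat -> 'I_m -> 'rV[F]_n2)
  (hgC : forall i t, (1 <= i <= s)%N -> g i t \in tdual (C s))
  (hhC : forall i t, (1 <= i <= s)%N -> h i t \in tdual (C s))
  (hgh : forall i t i' t', (1 <= i <= s)%N -> (1 <= i' <= s)%N ->
     tip (g i t) (h i' t') = ((i == i') && (t == t'))%:R)
  (hgg : forall i t i' t', (1 <= i <= s)%N -> (1 <= i' <= s)%N ->
     tip (g i t) (g i' t') = 0)
  (hhh : forall i t i' t', (1 <= i <= s)%N -> (1 <= i' <= s)%N ->
     tip (h i t) (h i' t') = 0)
  (hspan : forall j, (1 <= j <= s)%N -> forall v,
     v \in tdual (C j) <->
     exists c, exists a b : nat -> 'I_m -> bool,
       c \in C j /\ v = c + @ghcomb F m n2 g h j a b)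
  (* hypothesis of the lemma *)
  (hdelta : forall j, (1 <= j < s)%N -> delta j.+1 <= delta j) :
  forall w : 'I_n1 -> 'rV[F]_n2,
    @in_GCperp K m n1 alpha beta F om s n2 k (C s) g h w ->
    ~ @in_GC K m n1 alpha beta F om s n2 k (C s) g h w ->
    minj s (fun j => delta j * (n2 * (k j).+1)%:R) <= (wtG w)%:R
    /\ minj s (fun j => delta j * ((k j)%:R / n1%:R))
         <= (wtG w)%:R / (n1 * n2)%:R.
Proof.
Proof.
move=> w [b [hbi hrho]] hnGC.
have chF := @char2F _ hF.
have chK := @char2card _ _ hK.
have hkn : forall i, (1 <= i <= s)%N -> (1 <= k i < n1)%N.
  move=> i hi; have := hk i hi; rewrite hn1.
  have : (2 ^ m = 2 * 2 ^ (m - 1))%N by rewrite -expnS; congr (2 ^ _)%N; lia.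
  lia.
pose P i := ((1 <= i <= s)%N && [exists l : 'I_n1, exists t : 'I_m, b i l t != 0]).
have exP : exists i, P i.
  case: (boolP [exists i : 'I_s.+1, P i]) => [/existsP [i hi]|hn]; first by exists i.
  exfalso; apply: hnGC; exists b; split => // i hi.
  apply: Bi_zero => l t; apply/eqP; apply/negP => hnz.
  move/existsPn: hn => /(_ (Ordinal (leq_ltn_trans (proj2 (andP hi)) (ltnSn s)))).
  rewrite /P /= hi /= => /existsPn /(_ l) /existsPn /(_ t); rewrite negbK => /hnz [].
have ubP : forall i, P i -> (i <= s)%N by move=> i /andP[/andP[_ ->]].
case: (ex_maxnP exP ubP) => j /andP [hj hrow] maxj.
have hj1 : (1 <= j)%N by case/andP: hj.
have hjs : (j <= s)%N by case/andP: hj.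
have zero_above : forall i l t, (j < i <= s)%N -> b i l t = 0.
  move=> i l t /andP[hji his]; apply/eqP; apply/negP => hnz.
  have : P i.
    rewrite /P his andbT (leq_trans hj1 (ltnW hji)) /=.
    by apply/existsP; exists l; apply/existsP; exists t; apply/negP.
  by move/maxj; rewrite leqNgt hji.
have nest : forall i, (j <= i <= s)%N -> C i \subset C j.
  elim=> [|i IH] /andP[hji his]; first by move: hji hj1; clear; lia.
  case: (eqVneq j i.+1) => [<-|ne]; first exact: subxx.
  apply: subset_trans (hCnest i _) (IH _); lia.
have hCsj : C s \subset C j by apply: nest; rewrite hjs leqnn.
have col : forall l, [exists t, b j l t != 0] -> delta j * n2%:R <= (wt (w l))%:R.
  move=> l /existsP [t0 hnz].
  have [a [bb [hc hw]]] := hrho l.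
  apply: (hCdist j hj); rewrite inE; apply/andP; split.
  - apply/negP => hwl.
    have hgj : g j t0 \in tdual (C j).
      apply/(hspan j hj); exists 0, (fun i t => (i == j) && (t == t0)), (fun _ _ => false).
      split; first by case: (hCadd j hj).
      by rewrite add0r ghcomb_unitg.
    have hhj : h j t0 \in tdual (C j).
      apply/(hspan j hj); exists 0, (fun _ _ => false), (fun i t => (i == j) && (t == t0)).
      split; first by case: (hCadd j hj).
      by rewrite add0r ghcomb_unith.
    have tip_w : forall z, z \in tdual (C s) -> tip (w l) z = tip (ghcomb g h s a bb) z.
      move=> z hz; rewrite -{1}(subrK (ghcomb g h s a bb) (w l)) tipDl //.
      move: hz; rewrite inE => /forallP /(_ (w l - ghcomb g h s a bb)) /implyP /(_ hw) /eqP ->.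
      by rewrite add0r.
    have e1 : tip (w l) (g j t0) = 0.
      by move: hgj; rewrite inE => /forallP /(_ (w l)) /implyP /(_ hwl) /eqP.
    have e2 : tip (w l) (h j t0) = 0.
      by move: hhj; rewrite inE => /forallP /(_ (w l)) /implyP /(_ hwl) /eqP.
    rewrite tip_w ?hgC // tip_ghcomb // in e1.
    rewrite tip_w ?hhC // tip_ghcomb // in e2.
    have hb0 : bb j t0 = false.
      apply: (@bF_eq0 F); have := @sum_delta F s m j t0 (fun i t => bF F (bb i t)) hj; rewrite /= => <-; apply: (etrans _ e1).
      apply: eq_big_seq => i; rewrite mem_index_iota ltnS => hi.
      apply: eq_bigr => t _.
      by rewrite hgg // mulr0 add0r tipC // hgh // [j == i]eq_sym [t0 == t]eq_sym.
    have ha0 : a j t0 = false.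
      apply: (@bF_eq0 F); have := @sum_delta F s m j t0 (fun i t => bF F (a i t)) hj; rewrite /= => <-; apply: (etrans _ e2).
      apply: eq_big_seq => i; rewrite mem_index_iota ltnS => hi.
      apply: eq_bigr => t _.
      by rewrite hgh // hhh // mulr0 addr0.
    by move: hnz; rewrite hc // ha0 hb0 /bF /= !mul0r addr0 eqxx.
  - apply/(hspan j hj); exists (w l - ghcomb g h s a bb), a, bb; split.
      exact: (subsetP hCsj).
    rewrite (@ghcomb_trunc _ _ _ _ _ _ j) ?subrK // => i t hi.
    apply: (@bF_zero _ om hom); rewrite -hc ?zero_above //.
    by move: hi hj1; clear; lia.
have hex : exists l t, b j l t != 0.
  by move/existsP: hrow => [l /existsP [t ht]]; exists l, t.
have hcnt := @Bcount _ _ _ _ _ _ _ _ _ halpha chK hbeta hom (hkn j hj) (hbi j hj) hex.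
set L := [set l : 'I_n1 | [exists t, b j l t != 0]] in hcnt.
have hW : #|L|%:R * (delta j * n2%:R) <= (wtG w)%:R.
  rewrite /wtG natr_sum (bigID (mem L)) /= -[X in X <= _]addr0 lerD //; last first.
    by apply: sumr_ge0 => l _; apply: ler0n.
  rewrite mulr_natl -sumr_const; apply: ler_sum => l hl; apply: col.
  by rewrite inE in hl.
have n1p : 0 < n1%:R :> R by rewrite ltr0n; move: (hkn j hj); clear; lia.
have n2p : 0 < n2%:R :> R by rewrite ltr0n; move: hn2 hs hm; clear; nia.
case: (lerP 0 (delta j)) => hd.
  have hW2 : ((k j).+1)%:R * (delta j * n2%:R) <= (wtG w)%:R.
    apply: le_trans hW; apply: ler_wpM2r; last by rewrite ler_nat.
    by apply: mulr_ge0 hd (ler0n _ _).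
  split.
    apply: le_trans (@minj_le _ _ _ _ hj) _.
    by rewrite /= natrM mulrA mulrC.
  apply: le_trans (@minj_le _ _ _ _ hj) _; rewrite /= natrM.
  have -> : delta j * ((k j)%:R / n1%:R) = (delta j * (k j)%:R * n2%:R) / (n1%:R * n2%:R).
    by field; rewrite ?gt_eqF.
  apply: ler_wpM2r; first by rewrite invr_ge0 mulr_ge0 // ltW.
  apply: le_trans hW2; rewrite -natr1; nra.
split.
  apply: le_trans (@minj_le _ _ _ _ hj) _; apply: le_trans (ler0n _ _).
  exact: mulr_le0_ge0 (ltW hd) (ler0n _ _).
apply: le_trans (@minj_le _ _ _ _ hj) _; apply: (@le_trans _ _ 0).
  by apply: mulr_le0_ge0 (ltW hd) _; apply: divr_ge0; apply: ler0n.
by apply: divr_ge0; apply: ler0n.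
Qed.
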